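(* Let $y=f(x)$ be an ROC curve and let $0\le a<b\le 1$. Suppose $(h,k)$ is an optimal point of this ROC curve for every $t\in[a,b]$, and let $c_t(h,k)=th+(1-t)(1-k)$ denote its normalized expected cost. Then the volume over the ROC surface on $[a,b]$ satisfies $$\mathrm{VOROS}(f,[a,b])=\frac{1}{b-a}\int_a^b\left(1-\frac{\big(c_t(h,k)\big)^2}{2t(1-t)}\right)dt.$$
   Context: ROC space is $[0,1]^2$, a point $(x,y)$ representing a binary classifier with false positive rate $x$ and true positive rate $y$. An ROC curve is the graph of a function $f:[0,1]\to[0,1]$ obtained by joining by line segments finitely many points of ROC space, including $(0,0)$ and $(1,1)$. For $t\in[0,1]$, the normalized expected cost of $(x,y)$ is $\mathrm{Cost}(x,y,t)=tx+(1-t)(1-y)$. The upper convex hull of the curve is the boundary of the convex hull of the points of its graph together with $(0,0)$, $(1,1)$, $(1,0)$. For $t\in[0,1]$, an optimal point of the ROC curve is a point $(h,k)$ of the upper convex hull having a supporting line of slope $\frac{t}{1-t}$ (vertical if $t=1$), i.e. the convex hull lies entirely in the closed half-plane bounded by the line through $(h,k)$ of that slope on the side of higher cost; equivalently $\mathrm{Cost}(h,k,t)\le\mathrm{Cost}(x,y,t)$ for all $(x,y)$ in that convex hull. The area of lesser classifiers $A_t(h,k)$ is the area of the set of $(h',k')\in[0,1]^2$ with $\mathrm{Cost}(h',k',t)>\mathrm{Cost}(h,k,t)$. The volume over the ROC surface on $[a,b]$ (with the standard Lebesgue measure on $t$) is $\mathrm{VOROS}(f,[a,b])=\frac{1}{b-a}\int_a^b\max_{x\in[0,1]}A_t(x,f(x))\,dt$.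 *)

(* Defs.v *)
From HB Require Import structures.
From mathcomp Require Import all_boot all_order all_algebra.
From mathcomp Require Import all_classical all_reals all_analysis.
Set Implicit Arguments. Unset Strict Implicit. Unset Printing Implicit Defensive.
Import Order.TTheory GRing.Theory Num.Theory.
Import numFieldNormedType.Exports.
Local Open Scope classical_set_scope.
Local Open Scope ring_scope.

Section ROC.
Variable R : realType.

Definition Cost (x y t : R) : R := t * x + (1 - t) * (1 - y).

Definition ROC_curve (f : R -> R) : Prop :=
  exists s : seq (R * R),
    [/\ (1 < size s)%N,
        nth (0,0) s 0 = (0, 0),
        nth (0,0) s (size s).-1 = (1, 1),
        (forall i, (i < size s)%N ->
           0 <= (nth (0,0) s i).1 <= 1 /\ 0 <= (nth (0,0) s i).2 <= 1)
      & (forall i, (i.+1 < size s)%N -> (nth (0,0) s i).1 < (nth (0,0) s i.+1).1)] /\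
      (forall i x, (i.+1 < size s)%N ->
           (nth (0,0) s i).1 <= x <= (nth (0,0) s i.+1).1 ->
           f x = (nth (0,0) s i).2 + ((nth (0,0) s i.+1).2 - (nth (0,0) s i).2)
                 * (x - (nth (0,0) s i).1)
                 / ((nth (0,0) s i.+1).1 - (nth (0,0) s i).1)).

Definition conv_hull (S : set (R * R)) : set (R * R) :=
  [set p | exists n (w : 'I_n -> R) (q : 'I_n -> R * R),
     [/\ forall i, 0 <= w i, \sum_(i < n) w i = 1, forall i, S (q i)
       & p = (\sum_(i < n) w i * (q i).1, \sum_(i < n) w i * (q i).2)]].

Definition ROC_points (f : R -> R) : set (R * R) :=
  [set p | (0 <= p.1 <= 1 /\ p.2 = f p.1) \/ p = (0,0) \/ p = (1,1) \/ p = (1,0)].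

Definition ROC_hull (f : R -> R) : set (R * R) := conv_hull (ROC_points f).

(* upper convex hull: boundary of the convex hull *)
Definition upper_hull (f : R -> R) : set (R * R) :=
  closure (ROC_hull f) `\` interior (ROC_hull f).

Definition optimal_point (f : R -> R) (t h k : R) : Prop :=
  upper_hull f (h, k) /\
  forall p, ROC_hull f p -> Cost h k t <= Cost p.1 p.2 t.

Definition lesser_area (t h k : R) : \bar R :=
  ((@lebesgue_measure R) \x (@lebesgue_measure R))
    [set p : R * R | [/\ 0 <= p.1 <= 1, 0 <= p.2 <= 1 &
                       Cost h k t < Cost p.1 p.2 t]].

(* volume over the ROC surface on [a,b]; the max over x is written as a
   supremum (it is attained) *)
Definition VOROS (f : R -> R) (a b : R) : \bar R :=
  ((b - a)^-1)%:E *
  (\int[@lebesgue_measure R]_(t in `[a, b])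
     ereal_sup [set lesser_area t x (f x) | x in `[0%R, 1%R]])%E.

End ROC.

(* Main.v *)
Require Import Defs.
From HB Require Import structures.
From mathcomp Require Import all_boot all_order all_algebra.
From mathcomp Require Import all_classical all_reals all_analysis.
From mathcomp Require Import measurable_realfun ring lra zify.
Import Order.TTheory GRing.Theory Num.Theory.
Import numFieldNormedType.Exports.
Local Open Scope classical_set_scope.
Local Open Scope ring_scope.
Lemma ftc_lin (R : realType) (a1 a2 L : R) : 0 < L ->
  (\int[@lebesgue_measure R]_(x in `[0%R, L]) (a1 + a2 * x)%:E = (a1 * L + a2 * L^+2 / 2)%:E)%E.
Proof.
move=> L0.
pose P : {poly R} := a1 *: 'X + (a2 / 2) *: 'X^2.
have PE : forall x, P.[x] = a1 * x + a2 / 2 * x ^+ 2 by move=> x; rewrite /P !hornerE.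
have P'E : forall x, (P^`()).[x] = a1 + a2 * x.
  move=> x; rewrite /P derivD !derivZ derivX derivXn !hornerE /=; by field.
transitivity (\int[@lebesgue_measure R]_(x in `[0%R,L]) ((P^`()).[x])%:E)%E.
  by apply: eq_integral => x _; rewrite P'E.
rewrite (@continuous_FTC2 _ (fun x => (P^`()).[x]) (horner P)) //.
- rewrite !PE expr0n /= !mulr0 addr0 -EFinD; congr EFin; by field.
- apply: continuous_subspaceT. exact: continuous_horner.
- split.
  + by move=> x _; exact: derivable_horner.
  + apply: cvg_at_right_filter; exact: continuous_horner.
  + apply: cvg_at_left_filter; exact: continuous_horner.
- by move=> x _; rewrite -derivE.
Qed.

Section Area.
Variable R : realType.
Local Notation M := (measurableTypeR R).
Local Notation mu := ((@lebesgue_measure R) \x (@lebesgue_measure R))%E.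

Definition sq : set (M * M) := [set p | 0 <= p.1 <= 1 /\ 0 <= p.2 <= 1].
Definition Sgt (t c : R) : set (M * M) :=
  [set p | [/\ 0 <= p.1 <= 1, 0 <= p.2 <= 1 & c < Cost p.1 p.2 t]].
Definition Sle (t c : R) : set (M * M) :=
  [set p | [/\ 0 <= p.1 <= 1, 0 <= p.2 <= 1 & Cost p.1 p.2 t <= c]].

Lemma measurable_cost (t : R) : measurable_fun setT (fun p : M * M => Cost p.1 p.2 t).
Proof.
rewrite /Cost; apply: measurable_funD.
  by apply: measurable_funM => //.
by apply: measurable_funM => //; apply: measurable_funB => //.
Qed.

Lemma sqE : sq = [set` `[0%R, 1%R]] `*` [set` `[0%R, 1%R]].
Proof. by apply/seteqP; split => p /=; rewrite !in_itv /=. Qed.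

Lemma measurable_sq : measurable sq.
Proof. by rewrite sqE; apply: measurableX; exact: measurable_itv. Qed.

Lemma measurable_Sgt t c : measurable (Sgt t c).
Proof.
have -> : Sgt t c = sq `&` ((fun p : M * M => Cost p.1 p.2 t) @^-1` [set` `]c, +oo[]).
  by apply/seteqP; split => p /=; rewrite ?in_itv /= ?andbT; [case|case => -[]].
have := measurable_cost t measurableT [set` `]c, +oo[] (measurable_itv `]c, +oo[).
rewrite setTI => mS; exact: measurableI measurable_sq mS.
Qed.

Lemma measurable_Sle t c : measurable (Sle t c).
Proof.
have -> : Sle t c = sq `&` ((fun p : M * M => Cost p.1 p.2 t) @^-1` [set` `]-oo, c]]).
  by apply/seteqP; split => p /=; rewrite ?in_itv /= ?andbT; [case|case => -[]].
have := measurable_cost t measurableT [set` `]-oo, c]] (measurable_itv `]-oo, c]).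
rewrite setTI => mS; exact: measurableI measurable_sq mS.
Qed.

Lemma leb01 : lebesgue_measure ([set` `[0%R, 1%R]] : set R) = 1%E.
Proof. by rewrite lebesgue_measure_itv /= lte_fin ltr01 oppr0 adde0. Qed.

Lemma mu_sq : mu sq = 1%E.
Proof.
rewrite sqE product_measure1E; try exact: measurable_itv.
by rewrite -[RHS]mule1; congr (_ * _)%E; exact: leb01.
Qed.

Lemma mu_split t c : (mu (Sgt t c) + mu (Sle t c))%E = 1%E.
Proof.
rewrite -mu_sq -measureU; [|exact: measurable_Sgt|exact: measurable_Sle|].
  congr mu; apply/seteqP; split => p /=.
    by case=> -[] ? ? []; case.
  move=> [? ?]; case: (ltrP c (Cost p.1 p.2 t)) => ?; [left|right]; by split.
apply/seteqP; split => p //= [[_ _ h1] [_ _ h2]].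
by move: (lt_le_trans h1 h2); rewrite ltxx.
Qed.


Lemma leb_pt (a : R) : lebesgue_measure ([set` `[a, a]] : set R) = 0%E.
Proof. by rewrite lebesgue_measure_itv /= lte_fin ltxx. Qed.

Lemma mu_Sle0 t : 0 <= t <= 1 -> mu (Sle t 0) = 0%E.
Proof.
move=> /andP[t0 t1].
pose A : set (M * M) := [set` `[0%R, 0%R]] `*` [set` `[0%R, 1%R]].
pose B : set (M * M) := [set` `[0%R, 1%R]] `*` [set` `[1%R, 1%R]].
have mA : measurable A by apply: measurableX; exact: measurable_itv.
have mB : measurable B by apply: measurableX; exact: measurable_itv.
have muA : mu A = 0%E.
  rewrite product_measure1E; try exact: measurable_itv.
  by rewrite -[RHS](mul0e 1%E); congr (_ * _)%E; [exact: leb_pt|exact: leb01].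
have muB : mu B = 0%E.
  rewrite product_measure1E; try exact: measurable_itv.
  by rewrite -[RHS](mule0 1%E); congr (_ * _)%E; [exact: leb01|exact: leb_pt].
apply/eqP; rewrite eq_le measure_ge0 andbT.
rewrite -(adde0 0%E) -[X in (_ <= X + _)%E]muA -muB.
apply: le_trans (measureU2 _ mA mB).
apply: le_measure; rewrite ?inE; [exact: measurable_Sle|exact: measurableU|].
move=> [x y] /= [/andP[x0 x1] /andP[y0 y1]]; rewrite /Cost /= => hc.
have h1 : 0 <= t * x by rewrite mulr_ge0.
have h2 : 0 <= (1 - t) * (1 - y) by rewrite mulr_ge0 // subr_ge0.
have e1 : t * x = 0 by apply/eqP; rewrite eq_le h1 andbT; lra.
have e2 : (1 - t) * (1 - y) = 0 by apply/eqP; rewrite eq_le h2 andbT; lra.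
move/eqP: e1; rewrite mulf_eq0 => /orP[/eqP t00|/eqP x00].
  right; split; rewrite /= in_itv /= ?x0 ?x1 //.
  move: e2; rewrite t00 subr0 mul1r => e2; apply/andP; split; lra.
left; split; rewrite /= in_itv /= ?y0 ?y1 //; rewrite x00 lexx //.
Qed.

Lemma mu_Sle_pos t c : 0 < c -> c <= t -> c <= 1 - t ->
  mu (Sle t c) = (c ^+ 2 / (2 * t * (1 - t)))%:E.
Proof.
move=> c0 ct c1t.
have t0 : 0 < t by exact: lt_le_trans ct.
have t1 : 0 < 1 - t by exact: lt_le_trans c1t.
have tn0 : t != 0 by rewrite gt_eqF.
have t1n0 : 1 - t != 0 by rewrite gt_eqF.
pose L := c / t.
have L0 : 0 < L by rewrite divr_gt0.
have L1 : L <= 1 by rewrite ler_pdivrMr // mul1r.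
pose d x := (c - t * x) / (1 - t).
rewrite /product_measure1.
transitivity (\int[@lebesgue_measure R]_x
   (((fun x => (d x)%:E) \_ [set` `[0%R, L]]) x))%E.
  apply: eq_integral => x _ /=; rewrite patchE; case: ifPn => hx.
    move: hx; rewrite inE /= in_itv /= => /andP[x0 xL].
    have txc : t * x <= c by rewrite mulrC -ler_pdivlMr.
    have x1 : x <= 1 by exact: le_trans L1.
    have dx0 : 0 <= d x by apply: divr_ge0; [rewrite subr_ge0|exact: ltW].
    have dx1 : d x <= 1.
      rewrite /d ler_pdivrMr // mul1r.
      have : 0 <= t * x by rewrite mulr_ge0 // ltW.
      lra.
    have key y : (1 - d x <= y) = (t * x + (1 - t) * (1 - y) <= c).
      have -> : (1 - d x <= y) = (1 - y <= d x) by apply/idP/idP; lra.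
      by rewrite /d ler_pdivlMr // lerBrDr addrC [(1 - y) * _]mulrC.
    set S := xsection _ x.
    have -> : S = [set` `[1 - d x, 1]].
      apply/seteqP; split => y; rewrite /S /xsection /= inE /= in_itv /=.
        by case=> _ /andP[y0 y1] hc; rewrite key hc y1.
      move=> /andP[h y1]; split; rewrite ?x0 ?x1 ?y1 //.
        by rewrite /= andbT; lra.
      by rewrite /Cost /= -key.
    rewrite lebesgue_measure_itv /= lte_fin; case: ifPn => h.
      by rewrite -EFinD; congr EFin; ring.
    move: h; rewrite -leNgt => h; rewrite (_ : d x = 0) //; apply/eqP; rewrite eq_le dx0 andbT; lra.
  set S := xsection _ x.
  have -> : S = set0.
    apply/seteqP; split => y //=; rewrite /S /xsection /= inE.
    move=> [/andP[x0 x1] /andP[y0 y1] hc].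
    rewrite /= in x0 x1 y0 y1 hc.
    apply: (negP hx); rewrite inE /= in_itv /= x0 /=.
    have : 0 <= (1 - t) * (1 - y) by apply: mulr_ge0; [exact: ltW | rewrite subr_ge0].
    rewrite /Cost in hc.
    move=> h; rewrite /L ler_pdivlMr // mulrC; lra.
  by rewrite measure0.
rewrite -integral_mkcond.
transitivity (\int[@lebesgue_measure R]_(x in `[0%R, L])
   (c / (1 - t) + (- (t / (1 - t))) * x)%:E)%E.
  by apply: eq_integral => x _; congr EFin; rewrite /d; field.
by rewrite ftc_lin //; congr EFin; rewrite /L; field; rewrite t1n0 tn0.
Qed.

Lemma lesser_area_formula (t h k : R) : 0 <= t <= 1 -> 0 <= Cost h k t ->
  Cost h k t <= t -> Cost h k t <= 1 - t ->
  lesser_area t h k = (1 - Cost h k t ^+ 2 / (2 * t * (1 - t)))%:E.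
Proof.
move=> t01 c0 ct c1t.
have -> : @lesser_area R t h k = mu (Sgt t (Cost h k t)) by [].
have Hv : mu (Sle t (Cost h k t)) = (Cost h k t ^+ 2 / (2 * t * (1 - t)))%:E.
  move: c0; rewrite le_eqVlt => /orP[/eqP c0|c0].
    by rewrite -c0 mu_Sle0 // expr0n /= mul0r.
  exact: mu_Sle_pos.
have := mu_split t (Cost h k t); rewrite Hv => H.
by rewrite EFinB -H addeK.
Qed.

Lemma lesser_area_mono (t h k h' k' : R) : Cost h k t <= Cost h' k' t ->
  (lesser_area t h' k' <= lesser_area t h k)%E.
Proof.
move=> hc.
have -> : @lesser_area R t h k = mu (Sgt t (Cost h k t)) by [].
have -> : @lesser_area R t h' k' = mu (Sgt t (Cost h' k' t)) by [].
apply: le_measure; rewrite ?inE; [exact: measurable_Sgt|exact: measurable_Sgt|].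
by move=> p [? ? hp]; split => //; exact: le_lt_trans hp.
Qed.

End Area.
Section ROCpart.
Variable R : realType.

Lemma seg_exists (v : nat -> R * R) x m : (0 < m)%N ->
  (v 0%N).1 <= x -> x <= (v m).1 ->
  exists i, (i < m)%N /\ (v i).1 <= x <= (v i.+1).1.
Proof.
elim: m => [//|m IH] _ x0 xm.
case: m IH xm => [|m] IH xm; first by exists 0%N; rewrite x0 xm.
case: (lerP x (v m.+1).1) => h.
  by have [i [im hi]] := IH isT x0 h; exists i; split => //; exact: ltnW.
by exists m.+1; rewrite (ltW h) xm.
Qed.

Lemma min_exists (F : nat -> R) n : (0 < n)%N ->
  exists j, (j < n)%N /\ forall i, (i < n)%N -> F j <= F i.
Proof.
elim: n => [//|n IH] _.
case: n IH => [|n] IH; first by exists 0%N; split => // i; rewrite ltnS leqn0 => /eqP ->.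
have [j [jn hj]] := IH isT.
case: (lerP (F j) (F n.+1)) => h.
  exists j; split; first exact: ltnW.
  move=> i; rewrite ltnS leq_eqVlt => /orP[/eqP ->//|]; exact: hj.
exists n.+1; split => // i; rewrite ltnS leq_eqVlt => /orP[/eqP ->//|/hj].
by move=> hi; apply: le_trans hi; exact: ltW.
Qed.

Lemma hull_lb (S : set (R * R)) (m t : R) :
  (forall q, S q -> m <= Cost q.1 q.2 t) ->
  forall p, conv_hull S p -> m <= Cost p.1 p.2 t.
Proof.
move=> hS p [n [w [q [w0 w1 Sq ->]]]] /=.
have -> : Cost (\sum_(i < n) w i * (q i).1) (\sum_(i < n) w i * (q i).2) t =
          \sum_(i < n) w i * Cost (q i).1 (q i).2 t.
  rewrite [RHS](eq_bigr (fun i => t * (w i * (q i).1) + ((1 - t) * w i - (1 - t) * (w i * (q i).2))));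
    last by move=> i _; rewrite /Cost; ring.
  rewrite !big_split /= sumrN -!mulr_sumr w1 /Cost; ring.
have -> : m = \sum_(i < n) w i * m by rewrite -mulr_suml w1 mul1r.
apply: ler_sum => i _; apply: ler_wpM2l; first exact: w0.
exact: hS.
Qed.

Lemma hull_single (S : set (R * R)) p : S p -> conv_hull S p.
Proof.
move=> Sp; exists 1%N, (fun _ => 1), (fun _ => p); split => //.
- by rewrite big_ord1.
- by rewrite !big_ord1 !mul1r; case: p Sp.
Qed.

Lemma closure_lb (A : set (R * R)) (m t h k : R) : 0 <= t <= 1 ->
  (forall p, A p -> m <= Cost p.1 p.2 t) -> closure A (h, k) -> m <= Cost h k t.
Proof.
move=> /andP[t0 t1] hA cl.
rewrite leNgt; apply/negP => hlt.
pose e := (m - Cost h k t) / 2.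
have e0 : 0 < e by rewrite divr_gt0 // subr_gt0.
have [[p1 p2] [Ap [/= b1 b2]]] := cl _ (nbhsx_ballx (h, k) e e0).
move: b1 b2; rewrite /ball /= => b1 b2.
move: b1 b2; rewrite !ltr_norml => /andP[b1 b1'] /andP[b2 b2'].
have := hA _ Ap; rewrite /Cost /= in hlt * => hp.
rewrite /e /Cost in b1 b1' b2 b2'.
nra.
Qed.


Lemma roc_min (f : R -> R) t : ROC_curve f -> 0 <= t <= 1 ->
  exists x0, [/\ 0 <= x0 <= 1, 0 <= f x0 <= 1, Cost x0 (f x0) t <= t,
    Cost x0 (f x0) t <= 1 - t &
    forall p, ROC_points f p -> Cost x0 (f x0) t <= Cost p.1 p.2 t].
Proof.
move=> [s [[s1 sfirst slast sbnd sinc] fE]] /andP[t0 t1].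
pose v i := nth (0, 0) s i.
pose n := size s.
have vf : forall j, (j < n)%N -> f (v j).1 = (v j).2.
  move=> j jn.
  case: (ltnP j.+1 n) => hj.
    rewrite (fE j) //; last by rewrite lexx /= ltW // sinc.
    by rewrite subrr mulr0 mul0r addr0.
  have j0 : (0 < j)%N by rewrite /n in hj jn *; lia.
  have hj' : (j.-1.+1 < n)%N by rewrite /n in hj jn *; lia.
  have d0 : (v j.-1).1 < (v j).1 by have := sinc _ hj'; rewrite prednK.
  rewrite (fE j.-1) //; rewrite prednK //.
    rewrite /v in d0 *; field; rewrite subr_eq0 gt_eqF //.
  by rewrite lexx andbT ltW.
pose C j := Cost (v j).1 (v j).2 t.
have n0 : (0 < n)%N by exact: leq_trans s1.
have [j [jn hj]] := min_exists C n n0.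
have vb := sbnd j jn.
have C0 : C j <= 1 - t.
  have := hj 0%N n0; rewrite /C /v sfirst /Cost /= !mulr0 add0r subr0 mulr1 //.
have Cn : C j <= t.
  have : (n.-1 < n)%N by rewrite prednK.
  move/hj; rewrite /C /v slast /Cost /= subrr !mulr0 addr0 mulr1 //.
exists (v j).1; rewrite vf //; split; [by case: vb|by case: vb|exact: Cn|exact: C0|].
- move=> [p1 p2]; rewrite /ROC_points /= => -[[/andP[p0 p1'] ->]|[E|[E|E]]]; last 3 first.
  + by case: E => -> ->; move: C0; rewrite /Cost mulr0 add0r subr0 mulr1.
  + by case: E => -> ->; move: Cn; rewrite /Cost !subrr !mulr0 addr0 mulr1.
  + by case: E => -> ->; move: C0; rewrite /C /Cost subr0 !mulr1 => h; lra.
  + have [i [iN /andP[xi xi1]]] : exists i, (i < n.-1)%N /\ (v i).1 <= p1 <= (v i.+1).1.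
      apply: seg_exists.
      * by rewrite -ltnS prednK.
      * by rewrite /v sfirst.
      * by rewrite /v slast.
    have iN' : (i.+1 < n)%N by rewrite -[n]prednK.
    have iN'' : (i < n)%N by exact: ltnW.
    rewrite (fE i) //; last by rewrite /v in xi xi1; rewrite xi xi1.
    have di : (v i).1 < (v i.+1).1 by exact: sinc.
    pose lam := (p1 - (v i).1) / ((v i.+1).1 - (v i).1).
    have lam0 : 0 <= lam by rewrite /lam divr_ge0 // subr_ge0 // ltW.
    have lam1 : lam <= 1 by rewrite /lam ler_pdivrMr ?subr_gt0 // mul1r lerB.
    have E : Cost p1 ((v i).2 + ((v i.+1).2 - (v i).2) * (p1 - (v i).1) /
                ((v i.+1).1 - (v i).1)) t = (1 - lam) * C i + lam * C i.+1.
      rewrite /C /Cost /lam /v in di *; field.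
      by rewrite subr_eq0 gt_eqF.
    rewrite /v in E; rewrite E.
    have := hj _ iN''; have := hj _ iN'; rewrite /C /v => h1 h2.
    nra.
Qed.

End ROCpart.

Arguments roc_min {R}.
Arguments hull_lb {R}.
Arguments hull_single {R}.
Arguments closure_lb {R}.
Arguments lesser_area_formula {R}.
Arguments lesser_area_mono {R}.

Theorem theorem24 (R : realType) (f : R -> R) (a b h k : R) :
  ROC_curve f -> 0 <= a -> a < b -> b <= 1 ->
  (forall t, a <= t <= b -> optimal_point f t h k) ->
  VOROS f a b =
  (((b - a)^-1)%:E *
   \int[@lebesgue_measure R]_(t in `[a, b])
      (1 - (Cost h k t) ^+ 2 / (2 * t * (1 - t)))%:E)%E.
Proof.
move=> roc a0 ab b1 opt.
rewrite /VOROS; congr (_ * _)%E.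
apply: eq_integral => t; rewrite inE /= in_itv /= => /andP[ta tb].
have t01 : 0 <= t <= 1 by apply/andP; split; [exact: le_trans ta|exact: le_trans b1].
have [op1 op2] := opt t (introT andP (conj ta tb)).
have [x0 [x01 fx01 Ct C1t hmin]] := roc_min _ _ roc t01.
have hull_m := hull_lb _ _ _ hmin.
have cm : Cost h k t = Cost x0 (f x0) t.
  apply/eqP; rewrite eq_le; apply/andP; split.
    by apply: (op2 (x0, f x0)); apply: hull_single; left; split.
  by apply: closure_lb t01 hull_m _; case: op1.
have m0 : 0 <= Cost x0 (f x0) t.
  move: t01 x01 fx01 => /andP[t0 t1] /andP[x0' x1] /andP[f0 f1].
  rewrite /Cost; apply: addr_ge0; apply: mulr_ge0 => //; rewrite subr_ge0 //.
rewrite cm -lesser_area_formula //.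
apply/eqP; rewrite eq_le; apply/andP; split.
  apply: ge_ereal_sup => _ [x hx <-]; apply: lesser_area_mono.
  apply: (hull_m (x, f x)); apply: hull_single; left; split => //.
by apply: ereal_sup_ubound; exists x0 => //=; rewrite in_itv.
Qed.
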